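(* Let $\ell\ge 4$, $s\ge0$, $r\ge 2$ be integers and $k=\lfloor(\ell-2)/2\rfloor$. For every $\gamma>0$ there is $n_0$ such that for every $n\ge n_0$ the following holds: if $G$ is an $n$-vertex $B(\ell,s)$-free graph that maximizes $e_r(G)$ among all $n$-vertex $B(\ell,s)$-free graphs, or that maximizes $\mathcal N(S_r,G)$ among all $n$-vertex $B(\ell,s)$-free graphs, then there is a set $B\subseteq V(G)$ with $|B|=k$ such that at least $(1-\gamma)\binom{n}{r}$ of the $r$-element subsets of $V(G)$ have common neighborhood exactly $B$.
   Context: For a graph $G$ with degrees $d_1,\dots,d_n$, $e_r(G)=\sum_i d_i^r$ and $\mathcal N(S_r,G)=\sum_i\binom{d_i}{r}$ is the number of copies of the star $S_r$ with $r$ leaves. The broom $B(\ell,s)$ is the graph obtained from a path on $\ell$ vertices by adding $s$ new vertices, each joined only to a penultimate vertex of the path (a neighbor of an endpoint). The common neighborhood of a vertex set $X$ is the set of vertices adjacent to every vertex of $X$. *)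

(* Defs.v *)
From mathcomp Require Import all_boot all_order all_algebra.
From mathcomp Require Import reals.
Set Implicit Arguments. Unset Strict Implicit. Unset Printing Implicit Defensive.

Definition simple_graph (n : nat) (G : rel 'I_n) : Prop :=
  symmetric G /\ irreflexive G.

Definition deg (n : nat) (G : rel 'I_n) (v : 'I_n) : nat := #|[set u | G v u]|.

Definition e_r (r n : nat) (G : rel 'I_n) : nat := \sum_(v : 'I_n) deg G v ^ r.

Definition N_star (r n : nat) (G : rel 'I_n) : nat := \sum_(v : 'I_n) 'C(deg G v, r).

(* Broom B(l,s) on vertex set 'I_(l+s): path 0 - 1 - ... - (l-1), and
   leaves l, ..., l+s-1 each joined to vertex 1 (a neighbour of endpoint 0). *)
Definition broom_edge (l s : nat) (i j : 'I_(l + s)) : bool :=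
  [|| [&& (i < l)%N, (j < l)%N & ((val i == (val j).+1) || (val j == (val i).+1))],
      ((l <= i)%N && (j == 1 :> nat)) |
      ((l <= j)%N && (i == 1 :> nat))].

Arguments broom_edge : clear implicits.

Definition contains_broom (l s n : nat) (G : rel 'I_n) : Prop :=
  exists f : 'I_(l + s) -> 'I_n,
    injective f /\ forall i j, broom_edge l s i j -> G (f i) (f j).

Definition broom_free (l s n : nat) (G : rel 'I_n) : Prop := ~ contains_broom l s G.

Definition common_nbhd (n : nat) (G : rel 'I_n) (X : {set 'I_n}) : {set 'I_n} :=
  [set v | [forall u in X, G u v]].

Definition extremal_broom_free (l s n : nat) (F : rel 'I_n -> nat) (G : rel 'I_n) : Prop :=
  simple_graph G /\ broom_free l s G /\
  forall G' : rel 'I_n, simple_graph G' -> broom_free l s G' -> (F G' <= F G)%N.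

(* Main.v *)
Require Import Defs.
From mathcomp Require Import all_boot all_order all_algebra.
From mathcomp Require Import reals zify ring lra.
Import Order.TTheory GRing.Theory Num.Theory.
Set Implicit Arguments. Unset Strict Implicit. Unset Printing Implicit Defensive.

Lemma half_spec (i : nat) : i = odd i + (i./2).*2.
Proof. by rewrite odd_double_half. Qed.

Lemma sub_lt_aux (j l s : nat) : (j < l + s)%N -> ~~ (j < l)%N -> (j - l < s)%N.
Proof. lia. Qed.
Lemma sub_inj_aux (i j l : nat) : ~~ (i < l)%N -> ~~ (j < l)%N -> i - l = j - l -> i = j.
Proof. lia. Qed.

Lemma arith_eb (a b c t m : nat) : (a < t -> b <= a -> c <= 2 * t * m -> a + (b + c) <= 2 * t * m.+1)%N.
Proof. nia. Qed.

Section Graph.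
Variables (n : nat) (G : rel 'I_n).
Hypothesis Gsym : symmetric G.
Hypothesis Girr : irreflexive G.

Lemma in_common (Y : {set 'I_n}) x w : x \in Y -> w \in common_nbhd G Y -> G x w.
Proof. by move=> xY; rewrite inE => /forallP /(_ x); rewrite xY. Qed.

Lemma broom_common (l s k : nat) (Y : {set 'I_n}) :
  (2 <= l)%N -> (l <= 2 * k + 3)%N -> (k.+1 <= #|Y|)%N ->
  (k + 2 + s <= #|common_nbhd G Y|)%N -> contains_broom l s G.
Proof.
move=> l2 lk Yk Ck.
have [y0 _] : exists y0, y0 \in Y.
  by apply/set0Pn; rewrite -card_gt0; apply: leq_trans Yk.
set xs := enum Y. set ws := enum (common_nbhd G Y).
have sxs : size xs = #|Y| by rewrite -cardE.
have sws : size ws = #|common_nbhd G Y| by rewrite -cardE.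
have uxs : uniq xs := enum_uniq _.
have uws : uniq ws := enum_uniq _.
pose f (i : 'I_(l + s)) := if (i < l)%N then
   (if odd i then nth y0 xs i./2 else nth y0 ws i./2)
   else nth y0 ws (k + 2 + (i - l)).
have hY : forall i : 'I_(l+s), (i < l)%N -> odd i -> f i \in Y /\ (i./2 < size xs)%N.
  move=> i il oi; rewrite /f il oi.
  have hi : (i./2 < size xs)%N.
    rewrite sxs; apply: leq_trans Yk; move: (half_spec i); rewrite oi; lia.
  by split => //; rewrite -mem_enum; apply: mem_nth.
have hC : forall i : 'I_(l+s), ~~ ((i < l)%N && odd i) ->
   f i \in common_nbhd G Y /\
   ((i < l)%N -> i./2 < size ws /\ i./2 <= k.+1)%N /\
   (~~ (i < l)%N -> k + 2 + (i - l) < size ws)%N.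
  move=> i hi.
  have h1 : ((i < l)%N -> i./2 < size ws /\ i./2 <= k.+1)%N.
    move=> il; move: hi; rewrite il /= => oi.
    move: (half_spec i); rewrite (negbTE oi) sws => e; split; lia.
  have h2 : (~~ (i < l)%N -> k + 2 + (i - l) < size ws)%N.
    move=> il; rewrite sws; move: (ltn_ord i) il; lia.
  split=> //; rewrite -(mem_enum (mem (common_nbhd G Y))) -/ws /f.
  case: ifP => il.
    move: hi; rewrite il /= => /negbTE ->; apply: mem_nth; by case: (h1 il).
  by apply: mem_nth; apply: h2; rewrite il.
have adj : forall i j : 'I_(l+s), ((i < l)%N && odd i) -> ~~ ((j < l)%N && odd j) ->
   G (f i) (f j) /\ G (f j) (f i).
  move=> i j /andP[il oi] hj.
  have [fi _] := hY i il oi; have [fj _] := hC j hj.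
  have g := in_common fi fj; split => //; by rewrite Gsym.
exists f; split.
  move=> i j eij; apply/val_inj => /=.
  case hi: ((i < l)%N && odd i); case hj: ((j < l)%N && odd j).
  - move/andP: hi => [il oi]; move/andP: hj => [jl oj].
    have [_ si] := hY i il oi; have [_ sj] := hY j jl oj.
    move: eij; rewrite /f il oi jl oj => /eqP; rewrite nth_uniq // => /eqP e.
    by rewrite (half_spec i) (half_spec j) oi oj e.
  - move/andP: hi => [il oi]; have [fi _] := hY i il oi.
    have [fj _] := hC j (negbT hj).
    by move: (in_common fi fj); rewrite eij Girr.
  - move/andP: hj => [jl oj]; have [fj _] := hY j jl oj.
    have [fi _] := hC i (negbT hi).
    by move: (in_common fj fi); rewrite eij Girr.
  - have [_ [ai bi]] := hC i (negbT hi); have [_ [aj bj]] := hC j (negbT hj).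
    move: eij; rewrite /f.
    case il: (i < l)%N; case jl: (j < l)%N.
    + move: hi hj; rewrite il jl /= => /negbT/negbTE oi /negbT/negbTE oj.
      rewrite oi oj => /eqP; rewrite nth_uniq //; last by case: (aj jl).
        by move=> /eqP e; rewrite (half_spec i) (half_spec j) oi oj e.
      by case: (ai il).
    + move: hi; rewrite il /= => /negbT/negbTE oi; rewrite oi.
      move=> /eqP; rewrite nth_uniq //; last by apply: bj; rewrite jl.
      * case: (ai il) => _ h /eqP e; move: h; rewrite e; lia.
      * by case: (ai il).
    + move: hj; rewrite jl /= => /negbT/negbTE oj; rewrite oj.
      move=> /eqP; rewrite nth_uniq //; last by case: (aj jl).
      * case: (aj jl) => _ h /eqP e; move: h; rewrite -e; lia.
      * by apply: bi; rewrite il.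
    + move=> /eqP; rewrite nth_uniq //; [| by apply: bi; rewrite il | by apply: bj; rewrite jl].
      move=> /eqP e; move: il jl; lia.
move=> i j; rewrite /broom_edge.
case/or3P.
- move=> /and3P[il jl e].
  have hpar : odd i != odd j.
    by case/orP: e => /eqP ->; rewrite /= ?negbK; case: (odd _).
  case oi: (odd i).
  + have hi : (i < l)%N && odd i by rewrite il oi.
    have hj : ~~ ((j < l)%N && odd j) by move: hpar; rewrite oi jl /=; case: (odd j).
    by case: (adj i j hi hj).
  + have hj : (j < l)%N && odd j by move: hpar; rewrite oi jl /=; case: (odd j).
    have hi : ~~ ((i < l)%N && odd i) by rewrite oi andbF.
    by case: (adj j i hj hi).
- move=> /andP[li /eqP j1].
  have hj : (j < l)%N && odd j by rewrite j1; apply/andP; split => //.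
  have hi : ~~ ((i < l)%N && odd i) by rewrite ltnNge li.
  by case: (adj j i hj hi).
- move=> /andP[lj /eqP i1].
  have hi : (i < l)%N && odd i by rewrite i1; apply/andP; split => //.
  have hj : ~~ ((j < l)%N && odd j) by rewrite ltnNge lj.
  by case: (adj i j hi hj).
Qed.


Definition Nb (v : 'I_n) : {set 'I_n} := [set u | G v u].

Lemma dS_card (u : 'I_n) (S : {set 'I_n}) :
  \sum_(w in S) (G u w : nat) = #|Nb u :&: S|.
Proof.
rewrite -sum1_card big_mkcond [RHS]big_mkcond /=; apply: eq_bigr => w _.
by rewrite !inE; case: (w \in S); case: (G u w).
Qed.

Lemma ext_step (t : nat) (S : {set 'I_n}) (v : 'I_n) (L : seq 'I_n) :
  (t <= #|Nb v :&: S|)%N -> (size L < t)%N ->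
  exists w, [/\ w \in S, G v w & w \notin L].
Proof.
move=> ht hL.
have : ~~ (Nb v :&: S \subset [set x in L]).
  apply/negP => /subset_leq_card h.
  have : (#|[set x in L]| <= size L)%N.
    by rewrite (@eq_card _ _ (mem L)) ?card_size // => x; rewrite inE.
  move=> h2; have := leq_trans ht (leq_trans h h2); lia.
case/subsetPn => w; rewrite !inE => /andP[gw wS] wL.
by exists w.
Qed.

Lemma path_greedy (t : nat) (S : {set 'I_n}) :
  (forall v, v \in S -> t <= #|Nb v :&: S|)%N ->
  forall m (L : seq 'I_n) v, v \in S -> uniq (v :: L) -> (size L + m + 1 <= t)%N ->
  exists p, [/\ size p = m, path G v p, all (mem S) p & uniq (p ++ v :: L)].
Proof.
move=> hS; elim=> [|m IH] L v vS uL hs.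
  by exists [::].
have h1 : (size (v :: L) < t)%N by rewrite /=; lia.
have [w [wS gw wL]] := ext_step (hS v vS) h1.
have h2 : uniq (w :: v :: L) by rewrite /= -/(uniq (v :: L)) uL andbT; exact: wL.
have h3 : (size (v :: L) + m + 1 <= t)%N by rewrite /=; lia.
have [p [sp pp ap up]] := IH (v :: L) w wS h2 h3.
exists (w :: p); split => //=.
- by rewrite sp.
- by rewrite gw pp.
- by rewrite wS ap.
- by move: up; rewrite -cat1s uniq_catCA.
Qed.

Lemma leaves_greedy (t : nat) (S : {set 'I_n}) v :
  (t <= #|Nb v :&: S|)%N ->
  forall m (L : seq 'I_n), uniq L -> (size L + m <= t)%N ->
  exists q, [/\ size q = m, all (G v) q, all (mem S) q & uniq (q ++ L)].
Proof.
move=> hv; elim=> [|m IH] L uL hs.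
  by exists [::].
have h1 : (size L < t)%N by lia.
have [w [wS gw wL]] := ext_step hv h1.
have h2 : uniq (w :: L) by rewrite /= wL.
have h3 : (size (w :: L) + m <= t)%N by rewrite /=; lia.
have [q [sq aq asq uq]] := IH (w :: L) h2 h3.
exists (w :: q); split => //=.
- by rewrite sq.
- by rewrite gw aq.
- by rewrite wS asq.
- by move: uq; rewrite -cat1s uniq_catCA.
Qed.

Lemma greedy_broom (l s : nat) (S : {set 'I_n}) :
  (2 <= l)%N -> S != set0 ->
  (forall v, v \in S -> l + s <= #|Nb v :&: S|)%N -> contains_broom l s G.
Proof.
move=> l2 /set0Pn [v1 v1S] hS.
have h1 : (size [:: v1] + s.+1 <= l + s)%N by rewrite /=; lia.
have [q [sq aq asq uq]] := leaves_greedy (hS v1 v1S) (m := s.+1) (L := [:: v1]) isT h1.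
case: q sq aq asq uq => [|v0 zs] /=; first by []. move=> [szs] /andP[g10 azs] /andP[v0S azsS] uq.
have u1 : uniq (v1 :: v0 :: zs) by rewrite -cat1s uniq_catC /=; exact: uq.
have h2 : (size (v0 :: zs) + (l - 2) + 1 <= l + s)%N by rewrite /=; lia.
have [p [sp pp ap up]] := path_greedy hS (m := l - 2) v1S u1 h2.
set full := v0 :: v1 :: p.
have sfull : size full = l by rewrite /= sp; lia.
have ufz : uniq (full ++ zs).
  move: up; rewrite (uniq_catCA p [:: v1; v0] zs) /= !inE => /andP[/norP[a b] /andP[c d]]; by rewrite negb_or eq_sym a b c d.
have pf : path G v0 (v1 :: p) by rewrite /= pp Gsym g10.
pose f (i : 'I_(l + s)) := if (i < l)%N then nth v0 full i else nth v0 zs (i - l).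
have uf : uniq full by move: ufz; rewrite cat_uniq => /and3P[].
have uz : uniq zs by move: ufz; rewrite cat_uniq => /and3P[].
exists f; split.
  move=> i j; rewrite /f.
  case il: (i < l)%N; case jl: (j < l)%N.
  - move=> /eqP; rewrite nth_uniq ?sfull // => /eqP e; exact: val_inj.
  - move=> e; exfalso.
    move: ufz; rewrite cat_uniq => /and3P[_ /hasPn h _].
    have : nth v0 zs (j - l) \in zs by apply: mem_nth; rewrite szs; apply: sub_lt_aux => //; rewrite jl.
    move=> /h; rewrite -e mem_nth ?sfull //.
  - move=> e; exfalso.
    move: ufz; rewrite cat_uniq => /and3P[_ /hasPn h _].
    have : nth v0 zs (i - l) \in zs by apply: mem_nth; rewrite szs; apply: sub_lt_aux => //; rewrite il.
    move=> /h; rewrite e mem_nth ?sfull //.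
  - move=> /eqP; rewrite nth_uniq ?szs //; first (move=> /eqP e; apply: val_inj; apply: (sub_inj_aux (l := l)) => //; [by rewrite il | by rewrite jl]).
    + by apply: sub_lt_aux => //; rewrite il.
    + by apply: sub_lt_aux => //; rewrite jl.
have hpath : forall i, (i.+1 < l)%N -> G (nth v0 full i) (nth v0 full i.+1).
  move=> i hi; move/(pathP v0): pf => /(_ i); rewrite /= sp; apply; clear -hi l2; lia.
have hleaf : forall i : 'I_(l+s), ~~ (i < l)%N -> G v1 (f i).
  move=> i il; rewrite /f (negbTE il); move/allP: azs; apply; apply: mem_nth.
  rewrite szs; apply: sub_lt_aux => //; rewrite il.
have f1 : forall j : 'I_(l+s), val j = 1%N -> f j = v1.
  by move=> j j1; rewrite /f j1 (_ : (1 < l)%N).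
move=> i j; rewrite /broom_edge; case/or3P.
- move=> /and3P[il jl /orP[] /eqP e]; rewrite /f il jl.
  + rewrite e Gsym; apply: hpath; by rewrite -e.
  + rewrite e; apply: hpath; by rewrite -e.
- move=> /andP[li /eqP j1]; rewrite (f1 j) // Gsym; apply: hleaf; rewrite -leqNgt //.
- move=> /andP[lj /eqP i1]; rewrite (f1 i) //; apply: hleaf; rewrite -leqNgt //.
Qed.


Lemma edge_bound (l s : nat) : (2 <= l)%N -> broom_free l s G ->
  forall S : {set 'I_n}, (\sum_(u in S) #|Nb u :&: S| <= 2 * (l + s) * #|S|)%N.
Proof.
move=> l2 bf S; move: {2}#|S| (erefl #|S|) => m; elim: m S => [|m IH] S cS.
  move/eqP: cS; rewrite cards_eq0 => /eqP ->; by rewrite big_set0.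
have [v vS small] : exists2 v, v \in S & (#|Nb v :&: S| < l + s)%N.
  apply/exists_inP; apply: contraT; rewrite negb_exists_in => /forall_inP h.
  exfalso; apply: bf; apply: (greedy_broom (S := S)) => //.
    by rewrite -card_gt0 cS.
  by move=> u uS; move: (h u uS); rewrite -leqNgt.
have cS' : #|S :\ v| = m by rewrite (cardsD1 v S) vS in cS; case: cS.
have e1 : forall u, u \in S :\ v -> #|Nb u :&: S| = (G u v : nat) + #|Nb u :&: (S :\ v)|.
  move=> u _; by rewrite -!dS_card (big_setD1 _ vS).
rewrite (big_setD1 _ vS) /= (eq_bigr _ e1) big_split /=.
have e2 : (\sum_(i in S :\ v) (G i v : nat) <= #|Nb v :&: S|)%N.
  under eq_bigr => i _ do rewrite Gsym.
  rewrite dS_card; apply: subset_leq_card; apply: setIS; exact: subsetDl.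
have := IH _ cS'.
move: small e2; set a := #|Nb v :&: S|; set b := \sum_(i in S :\ v) _; set c := \sum_(i in _) _.
rewrite cS cS'; exact: arith_eb.
Qed.

End Graph.

Lemma leq_expn (a b e : nat) : (a <= b)%N -> (a ^ e <= b ^ e)%N.
Proof. move=> ab; elim: e => [|e IH]; rewrite ?expn0 // !expnS; exact: leq_mul. Qed.

Lemma ffact_le_exp (m r : nat) : (m ^_ r <= m ^ r)%N.
Proof.
elim: r m => [|r IH] m; first by rewrite ffactn0 expn0.
rewrite ffactnS expnS; apply: leq_mul => //; apply: leq_trans (IH _) _.
by apply: leq_expn; apply: leq_pred.
Qed.

Lemma ffact_ge (m r : nat) : ((m.+1 - r) ^ r <= m ^_ r)%N.
Proof.
elim: r m => [|r IH] m; first by rewrite ffactn0 expn0.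
case: m => [|m]; first by rewrite subSS sub0n exp0n.
rewrite ffactSS subSS expnS; apply: leq_mul; first by rewrite leq_subr.
exact: IH.
Qed.

Lemma exp_le_ffact_bin (m r : nat) : ('C(m, r) * r`! <= m ^ r)%N.
Proof. by rewrite bin_ffact ffact_le_exp. Qed.

Lemma card_lt (n k : nat) : (k <= n)%N -> #|[set u : 'I_n | (u < k)%N]| = k.
Proof.
move=> kn.
have -> : [set u : 'I_n | (u < k)%N] = (widen_ord kn) @: [set: 'I_k].
  apply/setP => u; rewrite inE; apply/idP/imsetP.
    by move=> uk; exists (Ordinal uk) => //; apply: val_inj.
  by case=> x _ ->; rewrite /= ltn_ord.
rewrite card_imset ?cardsT ?card_ord //; by move=> x y /(congr1 val) /= e; apply: val_inj.
Qed.

Definition G0 (n k : nat) : rel 'I_n := fun u v => (u != v) && ((u < k) || (v < k))%N.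
Arguments G0 : clear implicits.

Lemma G0_simple n k : simple_graph (G0 n k).
Proof.
split.
  by move=> u v; rewrite /G0 eq_sym orbC.
by move=> u; rewrite /G0 eqxx.
Qed.

Lemma G0_free (n k l s : nat) : (2 * k + 2 <= l)%N -> (k <= n)%N -> broom_free l s (G0 n k).
Proof.
move=> lk kn [f [finj fe]].
have ha : forall j : 'I_k.+1, (2 * j < l + s)%N.
  move=> j; move: (ltn_ord j); lia.
have hb : forall j : 'I_k.+1, (2 * j + 1 < l + s)%N.
  move=> j; move: (ltn_ord j); lia.
pose a j := Ordinal (ha j). pose b j := Ordinal (hb j).
have edge : forall j, G0 n k (f (a j)) (f (b j)).
  move=> j; apply: fe; rewrite /broom_edge /=; apply/or3P; apply: Or31.
  apply/and3P; split; last by rewrite addn1 eqxx orbT.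
    move: (ltn_ord j); lia.
  move: (ltn_ord j); lia.
pose g j := if (f (a j) < k)%N then f (a j) else f (b j).
have gK : forall j, g j \in [set u : 'I_n | (u < k)%N].
  move=> j; rewrite inE /g; case: ifP => // h.
  by move: (edge j); rewrite /G0 h /= => /andP[].
have ginj : injective g.
  move=> j1 j2; rewrite /g.
  case: ifP => _; case: ifP => _ /finj /(congr1 val) /=; move=> e; apply: ord_inj; lia.
have sub : g @: [set: 'I_k.+1] \subset [set u : 'I_n | (u < k)%N].
  by apply/subsetP => x /imsetP [j _ ->].
have := subset_leq_card sub.
by rewrite card_imset // cardsT card_ord card_lt // ltnn.
Qed.

Lemma deg_G0 n k (u : 'I_n) : (u < k)%N -> deg (G0 n k) u = n.-1.
Proof.
move=> uk; rewrite /deg.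
have -> : [set v | G0 n k u v] = [set~ u].
  by apply/setP => v; rewrite !inE /G0 [X in (X || _)](_ : _ = true) // orTb andbT eq_sym.
by rewrite cardsC1 card_ord.
Qed.

Lemma lower_bound (l s r n : nat) (G : rel 'I_n) :
  (2 * ((l - 2)./2) + 2 <= l)%N -> ((l - 2)./2 <= n)%N -> (1 <= r)%N ->
  (extremal_broom_free l s (@e_r r n) G \/ extremal_broom_free l s (@N_star r n) G) ->
  ((l - 2)./2 * (n - r) ^ r <= \sum_(v : 'I_n) deg G v ^ r)%N.
Proof.
set k := (l - 2)./2 => lk kn r1 hext.
have hK : forall F : nat -> nat,
    (k * F n.-1 <= \sum_(v : 'I_n) F (deg (G0 n k) v))%N.
  move=> F; rewrite -{1}(card_lt kn) -sum_nat_const.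
  rewrite [X in (_ <= X)%N](bigID (fun v : 'I_n => (v < k)%N)) /=.
  apply: leq_trans (leq_addr _ _); rewrite big_mkcond [X in (_ <= X)%N]big_mkcond /=.
  apply: leq_sum => v _; rewrite inE; case: ifP => // vk; by rewrite deg_G0.
have nr : ((n - r) ^ r <= n.-1 ^_ r)%N.
  apply: leq_trans (ffact_ge _ _); apply: leq_expn; lia.
case: hext => [[_ [_ h]] | [_ [_ h]]].
  have := h _ (G0_simple n k) (G0_free lk kn).
  rewrite /e_r => h2; apply: leq_trans h2.
  apply: leq_trans (hK (fun d => d ^ r)); rewrite leq_mul2l; apply/orP; right.
  by apply: leq_trans nr (ffact_le_exp _ _).
have := h _ (G0_simple n k) (G0_free lk kn).
rewrite /N_star => h2.
have h3 := leq_trans (hK (fun d => 'C(d, r))) h2.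
have : (k * 'C(n.-1, r) * r`! <= (\sum_v 'C(deg G v, r)) * r`!)%N by rewrite leq_mul2r h3 orbT.
rewrite -mulnA bin_ffact big_distrl /= => h4.
have h5 : (k * (n - r) ^ r <= k * n.-1 ^_ r)%N by rewrite leq_mul2l nr orbT.
apply: (leq_trans h5); apply: (leq_trans h4); apply: leq_sum => v _; exact: exp_le_ffact_bin.
Qed.
Lemma arithC (a b k n A Q L c D r : nat) :
 (a*b*k*n <= a*b*A + b*(a-1)*Q + a*L + a*b*k*r^2 ->
 A <= (k-1)*n -> A + Q <= k*n + c -> L <= D*n -> 2*a*D <= b -> 1 <= a -> 1 <= k -> 1 <= b ->
 n <= 2*a*(c + k*r^2))%N.
Proof.
case: a => [//|a1]; case: k => [//|k1].
rewrite !subn1 /= => h hA hAQ hL hb _ _ hb1.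
have h1 := leq_mul (leqnn (b*a1)) hAQ.
have h2 := leq_mul (leqnn b) hA.
have h3 := leq_mul (leqnn a1.+1) hL.
have h4 := leq_mul (leqnn n) hb.
have h5 : (b * n <= b * (2 * a1.+1 * (c + k1.+1 * r ^ 2)))%N.
  nia.
by rewrite leq_pmul2l in h5.
Qed.
Lemma arithQ (a b k n A Q L c D r : nat) :
 (a*b*k*n <= a*b*A + b*(a-1)*Q + a*L + a*b*k*r^2 ->
 A + Q <= k*n + c -> L <= D*n -> 1 <= a ->
 b*Q <= a*b*c + a*D*n + a*b*k*r^2)%N.
Proof.
case: a => [//|a1].
rewrite !subn1 /= => h hAQ hL _.
have h1 := leq_mul (leqnn (a1.+1*b)) hAQ.
have h3 := leq_mul (leqnn a1.+1) hL.
nia.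
Qed.
Lemma arithF (a b k n Q L c D r m x : nat) :
 (b*Q <= a*b*c + a*D*n + a*b*k*r^2 -> L <= D*n -> a*x <= k*n + a*r ->
  3* m*r*k <= a -> 3* m*(a+1)*D <= b -> 3* m*(a*c + a*k*r^2 + r^2) <= n ->
  m*(a*b*Q + a*L + a*b*r*x) <= a*b*n)%N.
Proof.
move=> hQ hL hx ha hb hn.
have h1 := leq_mul (leqnn (m*a)) hQ.
have h2 := leq_mul (leqnn (m*a)) hL.
have h3 := leq_mul (leqnn (m*b*r)) hx.
have h4 := leq_mul (leqnn (a*b)) hn.
have h5 := leq_mul (leqnn (a*n)) hb.
have h6 := leq_mul (leqnn (b*n)) ha.
nia.
Qed.
Lemma bern (n x r : nat) : (x <= n)%N -> (n ^ r <= (n - x) ^ r + r * x * n ^ (r - 1))%N.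
Proof.
move=> xn; elim: r => [|r IH]; first by rewrite !expn0.
have e1 : (n * (r * x * n ^ (r - 1)) <= r * x * n ^ r)%N.
  case: r IH => [|r] _; first by rewrite !mul0n muln0.
  by rewrite subn1 /= mulnCA -expnS.
have e2 : (n * (n - x) ^ r <= (n - x) ^ r.+1 + x * n ^ r)%N.
  have -> : n = (n - x) + x by rewrite subnK.
  rewrite addnK mulnDl expnS leq_add2l leq_mul2l; apply/orP; right.
  by apply: leq_expn; rewrite leq_addr.
rewrite subSS subn0 expnS.
have := leq_mul (leqnn n) IH.
move: e1 e2; set A := n * _; set B := (n - x) ^ r; nia.
Qed.
Lemma arithB (a n C k s : nat) : (a*n <= a*C + k.+1*n -> C <= k+1+s -> 2*k+2 <= a -> 2*(k+2+s) <= n -> False)%N.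
Proof.
move=> h1 h2 h3 h4.
have g1 := leq_mul h3 (leqnn n).
have g2 := leq_mul (leqnn a) h2.
have g3 := leq_mul (leqnn a) h4.
nia.
Qed.

Lemma arithBig (a n d : nat) : ((a-1)*n <= a*d -> a*(n-d) <= n)%N.
Proof. nia. Qed.

Lemma arithBH (a b n d : nat) : ((a-1)*n <= a*d -> 2 <= a -> 2 <= b -> n <= b*d)%N.
Proof.
move=> h ha hb.
have g1 : (n <= 2*d)%N by nia.
nia.
Qed.

Lemma arithMed (a n d : nat) : (~~ ((a-1)*n <= a*d) -> a*d <= (a-1)*n)%N.
Proof. lia. Qed.

Lemma arithLow (b n d : nat) : (~~ (n <= b*d) -> b*d <= 1*n)%N.
Proof. lia. Qed.

Lemma arithStar (a b k n r P SB SM SL A Q L Nr : nat) :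
  (k*Nr <= SB+SM+SL -> n*P <= Nr + r*r*P -> SB <= A*P ->
   a*SM <= (a-1)*Q*P -> b*SL <= L*P ->
   (a*b*k*n)*P <= (a*b*A + b*(a-1)*Q + a*L + a*b*k*r^2)*P)%N.
Proof.
move=> h1 h2 h3 h4 h5.
have g1 := leq_mul (leqnn (a*b*k)) h2.
have g2 := leq_mul (leqnn (a*b)) h1.
have g3 := leq_mul (leqnn (a*b)) h3.
have g4 := leq_mul (leqnn b) h4.
have g5 := leq_mul (leqnn a) h5.
nia.
Qed.

Lemma arithFinal (a b m1 n r P Nw x good f SM SL Q L Cn : nat) :
  (0 < a -> 0 < b -> 0 < f ->
  n*P <= Nw + r*x*P -> Nw <= good*f + SM + SL -> SM <= Q*P -> b*SL <= L*P ->
  m1.+1*(a*b*Q + a*L + a*b*r*x) <= a*b*n -> Cn*f <= n*P ->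
  m1*Cn <= m1.+1*good)%N.
Proof.
move=> a0 b0 f0 hB hN hM hL hF hC.
have g1 := leq_mul (leqnn (m1.+1*a*b)) hB.
have g2 := leq_mul (leqnn (m1.+1*a*b)) hN.
have g3 := leq_mul (leqnn (m1.+1*a*b)) hM.
have g4 := leq_mul (leqnn (m1.+1*a)) hL.
have g5 := leq_mul hF (leqnn P).
have g6 := leq_mul (leqnn (m1*a*b)) hC.
have : ((m1*Cn)*(a*b*f) <= (m1.+1*good)*(a*b*f))%N by nia.
by rewrite leq_pmul2r // !muln_gt0 a0 b0 f0.
Qed.

Lemma card_bigU (T : finType) (I : finType) (P : pred I) (F : I -> {set T}) :
  (#|\bigcup_(i | P i) F i| <= \sum_(i | P i) #|F i|)%N.
Proof.
elim/big_rec2: _ => [|i x y _ h]; first by rewrite cards0.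
apply: leq_trans (_ : #|F i| + #|y| <= _)%N; last by rewrite leq_add2l.
by rewrite -cardsUI leq_addr.
Qed.

Lemma pow_bound (u w d n r : nat) : (2 <= r)%N -> (d <= n)%N -> (u * d <= w * n)%N ->
  (u * d ^ r <= w * d * n ^ (r - 1))%N.
Proof.
case: r => [|[|r]] // _ dn h.
rewrite subn1 /= !expnS.
have h1 := leq_expn r dn.
have h2 := leq_mul h h1.
have h3 := leq_mul (leqnn d) h2.
nia.
Qed.

Lemma sub_aux (a b c : nat) : a + b = c -> (b <= c - a)%N.
Proof. lia. Qed.

Lemma arithX (a n W k r : nat) : (a*n <= a*W + k*n -> a*(n - (W - r)) <= k*n + a*r)%N.
Proof. nia. Qed.

Lemma half_bounds (l k : nat) : (4 <= l)%N -> k = (l - 2)./2 ->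
  [/\ (1 <= k)%N, (2 * k + 2 <= l)%N & (l <= 2 * k + 3)%N].
Proof.
move=> l4 ->; have := half_spec (l - 2); rewrite -muln2; case: (odd (l - 2)) => /= e; split; lia.
Qed.

Section Core.
Variables (n : nat) (G : rel 'I_n).
Hypothesis Gsym : symmetric G.
Hypothesis Girr : irreflexive G.

Lemma deg_le v : (deg G v <= n)%N.
Proof. by rewrite /deg; apply: leq_trans (max_card _) _; rewrite card_ord. Qed.

Lemma common_lb (Y : {set 'I_n}) :
  (n <= #|common_nbhd G Y| + \sum_(y in Y) (n - deg G y))%N.
Proof.
have sub : [set: 'I_n] \subset common_nbhd G Y :|: \bigcup_(y in Y) ~: Nb G y.
  apply/subsetP => v _; rewrite inE; case vC: (v \in common_nbhd G Y) => //=.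
  move: vC; rewrite inE => /negbT; rewrite negb_forall => /existsP [y].
  rewrite negb_imply => /andP [yY ny]; apply/bigcupP; exists y => //.
  by rewrite !inE.
have := subset_leq_card sub; rewrite cardsT card_ord => h.
apply: leq_trans h _; apply: leq_trans (leq_card_setU _ _) _.
rewrite leq_add2l; apply: leq_trans (card_bigU _ _) _.
apply: leq_sum => y _; rewrite /deg.
have e := cardsC (Nb G y); rewrite card_ord in e; exact: sub_aux e.
Qed.


Lemma split_sums (F : 'I_n -> nat) (Bg H : {set 'I_n}) : Bg \subset H ->
  [/\ \sum_v F v = \sum_(v in Bg) F v + \sum_(v in H :\: Bg) F v + \sum_(v in ~: H) F v,
      \sum_(v in H) F v = \sum_(v in Bg) F v + \sum_(v in H :\: Bg) F v &
      \sum_(v in ~: Bg) F v = \sum_(v in H :\: Bg) F v + \sum_(v in ~: H) F v].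
Proof.
move=> sub.
have eT : \sum_v F v = \sum_(v in [set: 'I_n]) F v by apply: eq_bigl => v; rewrite inE.
have eH : \sum_(v in H) F v = \sum_(v in Bg) F v + \sum_(v in H :\: Bg) F v.
  by rewrite (big_setID Bg) (setIidPr sub).
have e1 : \sum_v F v = \sum_(v in H) F v + \sum_(v in ~: H) F v.
  by rewrite eT (big_setID H) setTI setTD.
have e2 : \sum_v F v = \sum_(v in Bg) F v + \sum_(v in ~: Bg) F v.
  by rewrite eT (big_setID Bg) setTI setTD.
split => //; first by rewrite e1 eH.
move: e1 e2 eH; set x1 := \sum_v F v; set x2 := \sum_(v in H) F v.
set x3 := \sum_(v in ~: H) F v; set x4 := \sum_(v in Bg) F v.
set x5 := \sum_(v in ~: Bg) F v; set x6 := \sum_(v in H :\: Bg) F v.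
lia.
Qed.

Lemma deg_sum v : deg G v = \sum_w (G v w : nat).
Proof.
rewrite /deg -sum1_card big_mkcond /=; apply: eq_bigr => w _; rewrite inE; by case: (G v w).
Qed.


Lemma core (l s r m1 k D a b c : nat) :
  broom_free l s G -> (4 <= l)%N -> (2 <= r)%N ->
  k = (l - 2)./2 -> D = 2 * (l + s) ->
  (2 * k + 2 <= a)%N -> (3 * m1.+1 * r * k <= a)%N ->
  (2 * a * D <= b)%N -> (3 * m1.+1 * (a + 1) * D <= b)%N -> (2 <= b)%N ->
  (b * D * 2 ^ (b * D) * (k + 1 + s) <= c)%N ->
  (3 * m1.+1 * (a * c + a * k * r ^ 2 + r ^ 2) <= n)%N ->
  (2 * a * (c + k * r ^ 2) < n)%N -> (2 * (k + 2 + s) <= n)%N -> (r <= n)%N ->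
  (k * (n - r) ^ r <= \sum_(v : 'I_n) deg G v ^ r)%N ->
  exists B : {set 'I_n}, #|B| = k /\
    (m1 * 'C(n, r) <= m1.+1 * #|[set X : {set 'I_n} | (#|X| == r) && (common_nbhd G X == B)]|)%N.
Proof.
move=> bf l4 r2 hk hD ha1 ha2 hb1 hb2 hb3 hc hn1 hn2 hn3 hrn hlow.
have [k1 lk1 lk2] := half_bounds l4 hk.
have n0 : (0 < n)%N by apply: leq_trans hn3; rewrite muln_gt0 /= -addnA addnC addn_gt0.
have a2 : (2 <= a)%N by apply: leq_trans ha1; rewrite leq_addl.
have hM : forall Y : {set 'I_n}, (k.+1 <= #|Y|)%N -> (#|common_nbhd G Y| <= k + 1 + s)%N.
  move=> Y hY; rewrite leqNgt; apply/negP => h; apply: bf.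
  have l2 : (2 <= l)%N by apply: leq_trans l4.
  apply: (broom_common Gsym Girr l2 lk2 hY); by move: h; rewrite addn1 addn2 !addSn.
have hDsum : (\sum_(v : 'I_n) deg G v <= D * n)%N.
  have l2 : (2 <= l)%N by apply: leq_trans l4.
  have := edge_bound Gsym l2 bf [set: 'I_n].
  rewrite cardsT card_ord -hD; apply: leq_trans.
  have eT : \sum_(v : 'I_n) deg G v = \sum_(v in [set: 'I_n]) deg G v by apply: eq_bigl => v; rewrite inE.
  by rewrite eT; apply: leq_sum => v _; rewrite setIT.
set Bigs := [set v : 'I_n | ((a - 1) * n <= a * deg G v)%N].
have bigP : forall v, v \in Bigs -> (a * (n - deg G v) <= n)%N.
  by move=> v; rewrite inE; apply: arithBig.
have cardB : (#|Bigs| <= k)%N.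
  rewrite leqNgt; apply/negP => hB.
  set Y := [set x in take k.+1 (enum Bigs)].
  have cY : #|Y| = k.+1.
    have ut := take_uniq k.+1 (enum_uniq Bigs).
    rewrite (@eq_card _ _ (mem (take k.+1 (enum Bigs)))); last by move=> x; rewrite !inE.
    move/card_uniqP: ut => ->.
    by rewrite size_takel // -cardE.
  have YB : forall y, y \in Y -> y \in Bigs.
    by move=> y; rewrite inE => /mem_take; rewrite mem_enum.
  have h1 := common_lb Y.
  have h2 : (a * \sum_(y in Y) (n - deg G y) <= k.+1 * n)%N.
    rewrite big_distrr /= -cY -sum_nat_const; apply: leq_sum => y yY; exact: bigP (YB y yY).
  have h3 := leq_mul (leqnn a) h1.
  apply: (arithB (C := #|common_nbhd G Y|) (k := k) (s := s) (a := a) (n := n)) => //.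
    by apply: leq_trans h3 _; rewrite mulnDr leq_add2l.
  by apply: hM; rewrite cY.
set H := [set v : 'I_n | (n <= b * deg G v)%N].
have BH : Bigs \subset H.
  apply/subsetP => v; rewrite !inE => h; exact: arithBH h a2 hb3.
have cardH : (#|H| <= b * D)%N.
  have h1 : (#|H| * n <= b * D * n)%N.
    rewrite -sum_nat_const; apply: leq_trans (_ : \sum_(v in H) b * deg G v <= _)%N.
      by apply: leq_sum => v; rewrite inE.
    rewrite -big_distrr /= -mulnA leq_mul2l; apply/orP; right.
    apply: leq_trans hDsum; rewrite [X in (_ <= X)%N](bigID (mem H)) /=; exact: leq_addr.
  by rewrite leq_mul2r (gtn_eqF n0) in h1.
set U := \bigcup_(Y in powerset H | (k < #|Y|)%N) common_nbhd G Y.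
have cardU : (#|U| <= 2 ^ #|H| * (k + 1 + s))%N.
  apply: leq_trans (card_bigU _ _) _.
  apply: leq_trans (_ : \sum_(Y in powerset H | (k < #|Y|)%N) (k + 1 + s) <= _)%N.
    by apply: leq_sum => Y /andP[_ hY]; exact: hM.
  apply: leq_trans (_ : \sum_(Y in powerset H) (k + 1 + s) <= _)%N.
    by rewrite big_mkcondr /=; apply: leq_sum => Y _; case: ifP.
  by rewrite sum_nat_const card_powerset.
have sumH : (\sum_(v in H) deg G v <= k * n + c)%N.
  have e1 : \sum_(v in H) deg G v = \sum_(w : 'I_n) #|Nb G w :&: H|.
    rewrite (eq_bigr _ (fun v _ => deg_sum v)) exchange_big /=.
    by apply: eq_bigr => w _; rewrite -dS_card; apply: eq_bigr => v _; rewrite Gsym.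
  have e2 : forall w : 'I_n, (#|Nb G w :&: H| <= k + (w \in U) * #|H|)%N.
    move=> w; case: (leqP #|Nb G w :&: H| k) => hw; first exact: leq_trans hw (leq_addr _ _).
    have wU : w \in U.
      apply/bigcupP; exists (Nb G w :&: H); first by rewrite inE hw andbT subsetIr.
      rewrite inE; apply/forall_inP => u; rewrite !inE => /andP[guw _]; by rewrite Gsym.
    by rewrite wU mul1n; apply: leq_trans (leq_addl _ _); apply: subset_leq_card; exact: subsetIr.
  rewrite e1; apply: leq_trans (_ : \sum_(w < n) (k + (w \in U) * #|H|) <= _)%N.
    by apply: leq_sum => w _; exact: e2.
  rewrite big_split /= sum_nat_const card_ord mulnC leq_add2l -big_distrl /=.
  have -> : \sum_(i < n) (i \in U : nat) = #|U|.
    by rewrite -sum1_card [RHS]big_mkcond /=; apply: eq_bigr => i _; case: (i \in U).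
  apply: leq_trans hc; rewrite mulnC -mulnA; apply: leq_mul => //.
  apply: leq_trans cardU _; apply: leq_mul => //; exact: leq_pexp2l.
set P := n ^ (r - 1).
have P0 : (0 < P)%N by rewrite expn_gt0 n0.
have nP : n ^ r = n * P by rewrite /P -expnS subn1 prednK // ltnW.
set Med := H :\: Bigs. set Low := ~: H.
have [sp1 sp2 sp3] := split_sums (fun v => deg G v ^ r) BH.
have [sd1 sd2 _] := split_sums (fun v => deg G v) BH.
set A := \sum_(v in Bigs) deg G v. set Q := \sum_(v in Med) deg G v.
set L := \sum_(v in Low) deg G v.
set SB := \sum_(v in Bigs) deg G v ^ r. set SM := \sum_(v in Med) deg G v ^ r.
set SL := \sum_(v in Low) deg G v ^ r.
have hAQ : (A + Q <= k * n + c)%N by rewrite -sd2.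
have hL : (L <= D * n)%N by apply: leq_trans hDsum; rewrite sd1 leq_addl.
have hSB : (SB <= A * P)%N.
  rewrite /SB /A big_distrl /=; apply: leq_sum => v _.
  by rewrite -(mul1n (_ ^ r)) -(mul1n (_ * P)) mulnA pow_bound // ?deg_le // !mul1n deg_le.
have hSM : (a * SM <= (a - 1) * Q * P)%N.
  rewrite /SM /Q !big_distrr /= big_distrl /=; apply: leq_sum => v.
  rewrite inE => /andP[vB _]; apply: pow_bound => //; first exact: deg_le.
  by apply: arithMed; move: vB; rewrite inE.
have hSM' : (SM <= Q * P)%N.
  rewrite /SM /Q big_distrl /=; apply: leq_sum => v _.
  by rewrite -(mul1n (_ ^ r)) -(mul1n (_ * P)) mulnA pow_bound // ?deg_le // !mul1n deg_le.
have hSL : (b * SL <= L * P)%N.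
  rewrite /SL /L big_distrr big_distrl /=; apply: leq_sum => v.
  rewrite inE => vH; rewrite -(mul1n (_ * P)) mulnA; apply: pow_bound => //; first exact: deg_le.
  by apply: arithLow; move: vH; rewrite inE.
have hbern : (n * P <= (n - r) ^ r + r * r * P)%N by rewrite -nP; exact: bern.
have star : (a * b * k * n <= a * b * A + b * (a - 1) * Q + a * L + a * b * k * r ^ 2)%N.
  have := arithStar (k := k) (a := a) (b := b) (A := A) (Q := Q) (L := L) (_ : k * (n - r) ^ r <= SB + SM + SL)%N hbern hSB hSM hSL.
  by rewrite leq_pmul2r //; apply; rewrite -sp1.
have hA : (A <= #|Bigs| * n)%N.
  by rewrite -sum_nat_const; apply: leq_sum => v _; exact: deg_le.
have cB : #|Bigs| = k.
  apply/eqP; rewrite eqn_leq cardB /=; rewrite leqNgt; apply/negP => hlt.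
  have hA' : (A <= (k - 1) * n)%N.
    apply: leq_trans hA _; rewrite leq_mul2r; apply/orP; right.
    by rewrite leq_subRL // addnC addn1.
  have a1 : (1 <= a)%N by apply: leq_trans a2.
  have b1 : (1 <= b)%N by apply: leq_trans hb3.
  have := arithC star hA' hAQ hL hb1 a1 k1 b1.
  by rewrite leqNgt hn2.
have a1 : (1 <= a)%N by apply: leq_trans a2.
have b1 : (0 < b)%N by apply: leq_trans hb3.
have hQ := arithQ star hAQ hL a1.
set W := common_nbhd G Bigs.
have hW : (a * n <= a * #|W| + k * n)%N.
  have h1 := leq_mul (leqnn a) (common_lb Bigs).
  apply: leq_trans h1 _; rewrite mulnDr leq_add2l -cB big_distrr /= -sum_nat_const.
  by apply: leq_sum => v vB; exact: bigP.
set x := n - (#|W| - r).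
have hx : (a * x <= k * n + a * r)%N by apply: arithX.
have hF := arithF hQ hL hx ha2 hb2 hn1.
set good := [set X : {set 'I_n} | (#|X| == r) && (common_nbhd G X == Bigs)].
have hcount : ('C(#|W|, r) <= #|good| + \sum_(v in ~: Bigs) 'C(deg G v, r))%N.
  rewrite -cards_draws.
  have sub : [set X : {set 'I_n} | X \subset W & #|X| == r] \subset
      good :|: \bigcup_(v in ~: Bigs) [set X : {set 'I_n} | X \subset Nb G v & #|X| == r].
    apply/subsetP => X; rewrite inE => /andP[XW Xr]; rewrite inE.
    case gX: (X \in good) => //=.
    have BX : Bigs \subset common_nbhd G X.
      apply/subsetP => v vB; rewrite inE; apply/forall_inP => u uX.
      have uW := subsetP XW u uX; rewrite Gsym; exact: in_common uW.
    have : ~~ (common_nbhd G X \subset Bigs).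
      apply/negP => h; move: gX; rewrite inE Xr /=.
      by rewrite eqEsubset h BX.
    case/subsetPn => v vC vB; apply/bigcupP; exists v; first by rewrite inE.
    rewrite inE Xr andbT; apply/subsetP => u uX; rewrite inE Gsym.
    by move: vC; rewrite inE => /forall_inP; apply.
  apply: leq_trans (subset_leq_card sub) _; apply: leq_trans (leq_card_setU _ _) _.
  rewrite leq_add2l; apply: leq_trans (card_bigU _ _) _.
  by apply: leq_sum => v _; rewrite cards_draws.
have e1 : ((#|W| - r) ^ r <= 'C(#|W|, r) * r`!)%N.
  rewrite bin_ffact; apply: leq_trans (ffact_ge _ _); apply: leq_expn.
  by rewrite leq_sub2r.
have e2 : (\sum_(v in ~: Bigs) 'C(deg G v, r) * r`! <= SM + SL)%N.
  rewrite -sp3; apply: leq_sum => v _; exact: exp_le_ffact_bin.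
have hN : ((#|W| - r) ^ r <= #|good| * r`! + SM + SL)%N.
  apply: leq_trans e1 _; rewrite -addnA; apply: leq_trans (_ : (#|good| + \sum_(v in ~: Bigs) 'C(deg G v, r)) * r`! <= _)%N.
    by rewrite leq_mul2r hcount orbT.
  by rewrite mulnDl leq_add2l big_distrl.
have hB2 : (n * P <= (#|W| - r) ^ r + r * x * P)%N.
  have Wn : (#|W| <= n)%N by apply: leq_trans (max_card _) _; rewrite card_ord.
  have Wn' : (#|W| - r <= n)%N by apply: leq_trans (leq_subr r _) Wn.
  rewrite -nP /x; have := bern r (leq_subr (#|W| - r) n); by rewrite subKn.
have hC : ('C(n, r) * r`! <= n * P)%N by rewrite -nP; exact: exp_le_ffact_bin.
exists Bigs; split => //.
exact: (arithFinal (n := n) (a := a) (b := b) (Q := Q) (L := L) (x := x) a1 b1 (fact_gt0 r) hB2 hN hSM' hSL hF hC).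
Qed.

End Core.

Lemma real_final (R : realType) (gamma : R) (m1 C g : nat) :
  (0 < gamma)%R -> (gamma^-1 < (m1.+1)%:R)%R -> (m1 * C <= m1.+1 * g)%N ->
  ((1 - gamma) * C%:R <= g%:R)%R.
Proof.
move=> g0 hm hn.
have M0 : (0 < (m1.+1)%:R :> R)%R by rewrite ltr0n.
have hgm : (1 < gamma * (m1.+1)%:R)%R.
  have h0 : (gamma * gamma^-1 < gamma * (m1.+1)%:R)%R by rewrite ltr_pM2l.
  by rewrite mulfV ?gt_eqF in h0.
have hn' : ((m1%:R : R) * C%:R <= (m1.+1)%:R * g%:R)%R by rewrite -!natrM ler_nat.
have C0 : (0 <= C%:R :> R)%R by rewrite ler0n.
rewrite -(ler_pM2l M0).
have eM : ((m1.+1)%:R = m1%:R + 1 :> R)%R by rewrite -natr1.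
have h3 : (0 <= (gamma * (m1.+1)%:R - 1) * C%:R :> R)%R.
  by apply: mulr_ge0 => //; rewrite subr_ge0 ltW.
move: hn' h3; rewrite eM => hn' h3.
nra.
Qed.

Theorem mainTheorem5 (R : realType) (l s r : nat) :
  (4 <= l)%N -> (2 <= r)%N ->
  forall gamma : R, (0 < gamma)%R ->
  exists n0 : nat, forall n : nat, (n0 <= n)%N ->
  forall G : rel 'I_n,
    (extremal_broom_free l s (@e_r r n) G \/ extremal_broom_free l s (@N_star r n) G) ->
    exists B : {set 'I_n},
      #|B| = ((l - 2)./2)%N /\
      ((1 - gamma) * ('C(n, r))%:R <=
        (#|[set X : {set 'I_n} | (#|X| == r) && (common_nbhd G X == B)]|)%:R)%R.
Proof.
move=> l4 r2 gamma g0.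
set m1 := Num.truncn (gamma^-1).
have hm : (gamma^-1 < (m1.+1)%:R)%R by apply: truncnS_gt.
set k := (l - 2)./2.
set D := 2 * (l + s).
set a := 3 * m1.+1 * r * k + 2 * k + 2.
set b := 3 * m1.+1 * (a + 1) * D + 2 * a * D + 2.
set c := b * D * 2 ^ (b * D) * (k + 1 + s).
exists (3 * m1.+1 * (a * c + a * k * r ^ 2 + r ^ 2) + 2 * a * (c + k * r ^ 2) + 2 * (k + 2 + s) + r + k + 1).
move=> n hn G hext.
have [k1 lk1 lk2] := half_bounds l4 (erefl k).
have [[Gsym Girr] bf] : simple_graph G /\ broom_free l s G.
  by case: hext => [[h1 [h2 _]] | [h1 [h2 _]]].
have kn : (k <= n)%N by move: hn; lia.
have r1 : (1 <= r)%N by apply: ltnW.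
have hlow := lower_bound lk1 kn r1 hext.
have ha1 : (2 * k + 2 <= a)%N by rewrite /a; lia.
have ha2 : (3 * m1.+1 * r * k <= a)%N by rewrite /a; lia.
have hb1 : (2 * a * D <= b)%N by rewrite /b; lia.
have hb2 : (3 * m1.+1 * (a + 1) * D <= b)%N by rewrite /b; lia.
have hb3 : (2 <= b)%N by rewrite /b; lia.
have hn1 : (3 * m1.+1 * (a * c + a * k * r ^ 2 + r ^ 2) <= n)%N by move: hn; lia.
have hn2 : (2 * a * (c + k * r ^ 2) < n)%N by move: hn; lia.
have hn3 : (2 * (k + 2 + s) <= n)%N by move: hn; lia.
have hn4 : (r <= n)%N by move: hn; lia.
have [B [cB hB]] := core Gsym Girr bf l4 r2 (erefl k) (erefl D) ha1 ha2 hb1 hb2 hb3 (leqnn c) hn1 hn2 hn3 hn4 hlow.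
exists B; split => //; exact: real_final g0 hm hB.
Qed.
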